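(* Every Alster space is Hurewicz.
   Context: A topological space $X$ is Alster if every cover of $X$ by $G_\delta$ subsets of $X$ such that each compact subset of $X$ is included in some member of the cover has a countable subcover. A point-cofinite cover of a space is an infinite open cover such that each point of the space belongs to all but finitely many members of the cover. A space $X$ is Hurewicz if for each sequence $\{\mathcal{U}_n\}_{n<\omega}$ of open covers of $X$, none of which has a finite subcover, there are finite $\mathcal{F}_n\subseteq\mathcal{U}_n$ such that $\{\bigcup\mathcal{F}_n : n<\omega\}$ is a point-cofinite cover of $X$. No separation axioms are assumed. *)

(* Defs.v *)
(* topological spaces are [topologicalType]
   (no separation axioms assumed). *)
From HB Require Import structures.
From mathcomp Require Import all_boot all_order.
From mathcomp Require Import all_classical all_reals.
From mathcomp Require Import topology.
Set Implicit Arguments. Unset Strict Implicit. Unset Printing Implicit Defensive.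
Local Open Scope classical_set_scope.

Definition Gdelta {T : topologicalType} (A : set T) : Prop :=
  exists U : nat -> set T, (forall n, open (U n)) /\ A = \bigcap_n U n.

Definition is_cover {T : Type} (C : set (set T)) : Prop :=
  \bigcup_(A in C) A = setT.

Definition open_cover {T : topologicalType} (C : set (set T)) : Prop :=
  (forall A, C A -> open A) /\ is_cover C.

Definition has_finite_subcover {T : Type} (C : set (set T)) : Prop :=
  exists D, D `<=` C /\ finite_set D /\ is_cover D.

Definition has_countable_subcover {T : Type} (C : set (set T)) : Prop :=
  exists D, D `<=` C /\ countable D /\ is_cover D.

Definition Alster (T : topologicalType) : Prop :=
  forall C : set (set T),
    (forall A, C A -> Gdelta A) -> is_cover C ->
    (forall K : set T, compact K -> exists2 A, C A & K `<=` A) ->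
    has_countable_subcover C.

Definition point_cofinite_cover {T : topologicalType} (V : set (set T)) : Prop :=
  infinite_set V /\ open_cover V /\
  (forall x : T, finite_set [set A | V A /\ ~ A x]).

Definition Hurewicz (T : topologicalType) : Prop :=
  forall U : nat -> set (set T),
    (forall n, open_cover (U n)) ->
    (forall n, ~ has_finite_subcover (U n)) ->
    exists F : nat -> set (set T),
      (forall n, F n `<=` U n /\ finite_set (F n)) /\
      point_cofinite_cover (range (fun n => \bigcup_(A in F n) A)).

(* Main.v *)
Require Import Defs.
From HB Require Import structures.
From mathcomp Require Import all_boot all_order.
From mathcomp Require Import finmap.
From mathcomp Require Import all_classical topology.
Set Implicit Arguments. Unset Strict Implicit. Unset Printing Implicit Defensive.
Local Open Scope classical_set_scope.

Definition pT (T : topologicalType) (x : T) : Type := T.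
HB.instance Definition _ (T : topologicalType) (x : T) := Topological.on (@pT T x).
HB.instance Definition _ (T : topologicalType) (x : T) := isPointed.Build (@pT T x) x.

Lemma cc (T : topologicalType) (x : T) (K : set T) : compact K -> cover_compact K.
Proof.
move=> HK.
have : @compact (@pT T x) K by exact HK.
rewrite compact_cover.
exact.
Qed.

Lemma nat_finite_bound (A : set nat) : finite_set A ->
  exists N, forall a, A a -> (a < N)%N.
Proof.
move=> /finite_seqP[s ->].
elim: s => [|x s [N HN]]; first by exists 0%N.
exists (maxn x.+1 N) => a /=; rewrite inE => /orP[/eqP->|as_].
  by rewrite leq_max ltnSn.
by rewrite leq_max (HN a) ?orbT.
Qed.

Lemma compact_fin (T : topologicalType) (V : set (set T)) (K : set T) :
  open_cover V -> compact K ->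
  exists G : set (set T), G `<=` V /\ finite_set G /\ K `<=` \bigcup_(B in G) B.
Proof.
move=> [Vop Vcov] HK.
case: (pselect (exists x, K x)) => [[x Kx]|nK]; last first.
  exists set0; split => //; split; first exact: finite_set0.
  by move=> x Kx; exfalso; apply: nK; exists x.
have Kc : K `<=` cover V id.
  move=> y _; have : setT y by [].
  by rewrite -Vcov => -[B VB By]; exists B.
have [D' sD' cov] := cc x HK (I := set T) (D := V) (f := id) Vop Kc.
exists (fun B => B \in D'); split; last split.
- by move=> B HB; have := sD' B HB; rewrite inE.
- exact: (finite_fset D').
- exact: cov.
Qed.

Theorem theorem2p3 (T : topologicalType) : Alster T -> Hurewicz T.
Proof.
move=> HA U Uop Unf.
pose C := [set A : set T | exists G : nat -> set (set T),
  (forall n, G n `<=` U n /\ finite_set (G n)) /\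
  A = \bigcap_n \bigcup_(B in G n) B].
have Ccomp : forall K : set T, compact K -> exists2 A, C A & K `<=` A.
  move=> K HK.
  have /choice[G HG] := fun n => compact_fin (Uop n) HK.
  exists (\bigcap_n \bigcup_(B in G n) B).
    by exists G; split => // n; have [? [? _]] := HG n.
  by move=> x Kx n _; have [_ [_ /(_ x Kx)]] := HG n.
have Cg : forall A, C A -> Gdelta A.
  move=> A [G [HG ->]]; exists (fun n => \bigcup_(B in G n) B); split => //.
  move=> n; apply: bigcup_open => B GB; apply: (Uop n).1.
  by have [+ _] := HG n; apply.
have Ccov : is_cover C.
  apply/seteqP; split => // x _.
  have [A CA] := Ccomp _ (@compact_set1 T x).
  by move=> /(_ x erefl) Ax; exists A.
have [D [DC [Dcount Dcov]]] := HA C Cg Ccov Ccomp.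
have /countable_injP [f finj] := Dcount.
have /choice [GA HGA] : forall A : set T, exists G : nat -> set (set T), D A ->
    (forall n, G n `<=` U n /\ finite_set (G n)) /\
    A = \bigcap_n \bigcup_(B in G n) B.
  move=> A; case: (pselect (D A)) => [DA|nDA]; last by exists (fun _ => set0).
  by have [G HG] := DC A DA; exists G.
pose Ix n := [set A | D A /\ (f A <= n)%N].
pose F n := \bigcup_(A in Ix n) GA A n.
pose V n := \bigcup_(B in F n) B.
have Ifin : forall n, finite_set (Ix n).
  have /choice [g Hg] : forall k : nat, exists A : set T,
      (exists A', D A' /\ f A' = k) -> D A /\ f A = k.
    move=> k; case: (pselect (exists A', D A' /\ f A' = k)) => [[A' HA']|nk];
      last by exists set0.
    by exists A'.
  move=> n; apply: (@sub_finite_set _ _ (g @` `I_n.+1)); last exact: finite_image.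
  move=> A [DA fA]; exists (f A); first by rewrite /= ltnS.
  have [Dg fg] := Hg (f A) (ex_intro _ A (conj DA erefl)).
  by apply: finj; rewrite ?in_setE.
have kx : forall x, exists k, forall n, (k <= n)%N -> V n x.
  move=> x; have : setT x by []; rewrite -Dcov => -[A DA Ax].
  exists (f A) => n kn; have [_ Aeq] := HGA A DA.
  move: Ax; rewrite {1}Aeq => /(_ n Logic.I) [B GB Bx].
  by exists B => //; exists A.
have Vne : forall n, ~ V n = setT.
  move=> n Vn; apply: (Unf n); exists (F n); split; last split.
  - by move=> B [A [DA _] GB]; exact: ((HGA A DA).1 n).1 B GB.
  - by apply: bigcup_finite => // A [DA _]; exact: ((HGA A DA).1 n).2.
  - exact: Vn.
exists F; split.
  move=> n; split.
  - by move=> B [A [DA _] GB]; exact: ((HGA A DA).1 n).1 B GB.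
  - by apply: bigcup_finite => // A [DA _]; exact: ((HGA A DA).1 n).2.
split; [|split].
- move=> Rfin.
  have /choice [kk Hkk] := kx.
  have /choice [p Hp] : forall n, exists y, ~ V n y.
    move=> n; apply: contrapT => Hn; apply: (Vne n); apply/seteqP; split => // y _.
    by apply: contrapT => Hy; apply: Hn; exists y.
  have /choice [q Hq] : forall A : set T, exists m, (exists n, V n = A) -> V m = A.
    move=> A; case: (pselect (exists n, V n = A)) => [[n Hn]|nA]; last by exists 0%N.
    by exists n.
  have [N HN] := nat_finite_bound (finite_image (fun A => kk (p (q A))) Rfin).
  have RVN : range V (V N) by exists N.
  have Em := Hq (V N) (ex_intro _ N erefl).
  have := HN _ (ex_intro2 _ _ _ RVN erefl) => /ltnW /Hkk.
  move: Em; set m := q (V N) => Em; rewrite -Em; exact: Hp.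
- split.
  + move=> A [n _ <-]; apply: bigcup_open => B [A' [DA' _] GB]; apply: (Uop n).1.
    exact: ((HGA A' DA').1 n).1 B GB.
  + apply/seteqP; split => // x _; have [k Hk] := kx x.
    by exists (V k); [exists k | exact: Hk k (leqnn k)].
- move=> x; have [k Hk] := kx x.
  apply: (@sub_finite_set _ _ (V @` `I_k)); last exact: finite_image.
  move=> A [[n _ <-] nVx]; exists n => //=.
  by rewrite ltnNge; apply/negP => /Hk.
Qed.
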